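(* In the setting of the finite systems (see context), for every $t$: $$\det(\lambda I-L1_N(t))=\lambda^{N+2}-C_0\lambda^{N+1}-C_1\lambda^{N}-\dots-C_{N+1},$$ $$\det(\lambda I-L2_N(t))=\lambda^{N+p+1}-\tilde C_0\lambda^{N+p}-\tilde C_1\lambda^{N+p-1}-\dots-\tilde C_{N+p},$$ i.e. the finite rank coefficients $C_v$ and $\tilde C_v$ coincide, up to sign, with the coefficients of the characteristic polynomials of $L1_N$ and $L2_N$.
   Context: Let $p\ge1$, $N\ge 2p-1$, and let $a_0,\dots,a_N$ and $b_0,\dots,b_N$ be nonzero complex numbers (e.g. values at time $t$ of solutions of the finite Bogoyavlensky lattices $\dot a_i=a_i(\prod_{j=1}^p a_{i+j}-\prod_{j=1}^p a_{i-j})$ and $\dot b_i=b_i(\sum_{j=1}^p b_{i+j}-\sum_{j=1}^p b_{i-j})$, $i=0,\dots,N$, with $a_l=b_l=0$ for $l<0$ or $l>N$). $L1_N$ is the $(N+2)\times(N+2)$ matrix (indices $0,\dots,N+1$) with $(L1_N)_{i,i+p}=1$ for $0\le i\le N+1-p$, $(L1_N)_{i+1,i}=a_i$ for $0\le i\le N$, other entries zero; $S^l_k=(L1_N^k)_{l-1,0}$ for $l=1,\dots,p$, $k\ge0$. $C_0,\dots,C_{N+1}$ are the complex numbers with $S^l_k=\sum_{v=0}^{N+1}C_vS^l_{k-v-1}$ for all $k\ge N+2$, $l=1,\dots,p$. $L2_N$ is the $(N+p+1)\times(N+p+1)$ matrix (indices $0,\dots,N+p$) with $(L2_N)_{i,i+1}=1$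 for $0\le i\le N+p-1$, $(L2_N)_{i+p,i}=b_i$ for $0\le i\le N$, other entries zero; $\tilde S^l_k=(L2_N^k)_{0,l-1}$; $\tilde C_0,\dots,\tilde C_{N+p}$ are the complex numbers with $\tilde S^l_k=\sum_{v=0}^{N+p}\tilde C_v\tilde S^l_{k-v-1}$ for all $k\ge N+p+1$, $l=1,\dots,p$. Standing fact from the paper: with $\alpha_{i,j}=S^{\operatorname{rem}(i,p)+1}_{\lfloor i/p\rfloor+j}$, the determinants $\det(\alpha_{i,j})_{i,j=0}^k$ are nonzero for $k=0,\dots,N+1$ and the matrix $(\alpha_{i,j})_{i,j\ge0}$ has rank $N+2$ (analogously for the $\tilde S$ with $\tilde\alpha_{i,j}=\tilde S^{\operatorname{rem}(j,p)+1}_{i+\lfloor j/p\rfloor}$, orders up to $N+p+1$), so these coefficients are uniquely determined. *)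

(* Defs.v *)
From HB Require Import structures.
From mathcomp Require Import all_boot all_order all_algebra.
From mathcomp Require Import complex.
From mathcomp Require Import reals.
Set Implicit Arguments. Unset Strict Implicit. Unset Printing Implicit Defensive.
Import Order.TTheory GRing.Theory Num.Theory.
Local Open Scope ring_scope.

Section Lax.
Variable R : realType.
Local Notation C := (complex R).

Definition L1 (p N : nat) (a : nat -> C) : 'M[C]_(N.+2) :=
  \matrix_(i < N.+2, j < N.+2)
    if (j : nat) == (i + p)%N then 1
    else if (i : nat) == j.+1 then a j else 0.

Definition S1 (p N : nat) (a : nat -> C) (l k : nat) : C :=
  ((L1 p N a) ^+ k) (inord l.-1) ord0.

Definition L2 (p N : nat) (b : nat -> C) : 'M[C]_((N + p).+1) :=
  \matrix_(i < (N + p).+1, j < (N + p).+1)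
    if (j : nat) == i.+1 then 1
    else if (i : nat) == (j + p)%N then b j else 0.

Definition S2 (p N : nat) (b : nat -> C) (l k : nat) : C :=
  ((L2 p N b) ^+ k) ord0 (inord l.-1).

End Lax.

(* Main.v *)
From HB Require Import structures.
From mathcomp Require Import all_boot all_order all_algebra.
From mathcomp Require Import zify.
Import Order.TTheory GRing.Theory Num.Theory.
Local Open Scope ring_scope.

Lemma sum_if_eq (F : fieldType) n (f : 'I_n.+1 -> F) (t : nat) :
  \sum_(k < n.+1) (if (k : nat) == t then f k else 0) = if (t <= n)%N then f (inord t) else 0.
Proof.
case: ifP => ht.
  rewrite (bigD1 (inord t)) //= inordK ?ltnS // eqxx big1 ?addr0 // => k hk.
  case: eqP => // ekt; case/eqP: hk; apply: val_inj; rewrite /= inordK ?ltnS //.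
rewrite big1 // => k _; case: eqP => // ekt.
by move: (ltn_ord k); rewrite ekt ltnS ht.
Qed.

Definition bidiag {F : fieldType} {n} p (A : 'M[F]_n.+1) (al be : nat -> F) :=
  forall i j : 'I_n.+1, A i j = (if ((i:nat) == (j:nat).-1) && (0 < j)%N then al j else 0)
     + (if (i:nat) == (j + p)%N then be j else 0).

Lemma mulA_formula (F : fieldType) m n p (A : 'M[F]_n.+1) (al be : nat -> F) :
  bidiag p A al be ->
  forall (M : 'M[F]_(m, n.+1)) i (j : 'I_n.+1),
  (M *m A) i j = (if (0 < j)%N then al j * M i (inord j.-1) else 0)
     + (if (j + p <= n)%N then be j * M i (inord (j + p)) else 0).
Proof.
move=> hA M i j; rewrite mxE.
under eq_bigr => k _ do rewrite hA mulrDr.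
rewrite big_split /=.
congr (_ + _).
- case hj: (0 < j)%N.
  + idtac; transitivity (\sum_(k < n.+1) (if (k:nat) == j.-1 then al j * M i k else 0)).
      by apply: eq_bigr => k _; rewrite andbT; case: eqP => _; rewrite ?mulr0 // mulrC.
    rewrite sum_if_eq; have := ltn_ord j; case: ifP => //; lia.
  + by rewrite big1 // => k _; rewrite andbF mulr0.
- transitivity (\sum_(k < n.+1) (if (k:nat) == (j + p)%N then be j * M i k else 0)).
    by apply: eq_bigr => k _; case: eqP => _; rewrite ?mulr0 // mulrC.
  by rewrite sum_if_eq.
Qed.
Arguments mulA_formula {F m n p A al be}.

Lemma tri_lemma (F : fieldType) n p (A : 'M[F]_n.+1) (al be : nat -> F) :
  (0 < p)%N -> bidiag p A al be -> (forall j, (0 < j <= n)%N -> al j != 0) ->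
  forall k, (k <= n)%N ->
  (A ^+ k) ord0 (inord k) != 0 /\ forall j : 'I_n.+1, (k < j)%N -> (A ^+ k) ord0 j = 0.
Proof.
move=> hp hA hal; elim=> [|k IH] hk.
  rewrite expr0; split.
    by rewrite mxE (_ : inord 0 = ord0) ?eqxx ?oner_neq0 //; apply: val_inj; rewrite /= inordK.
  by move=> j hj; rewrite mxE; case: eqP => // e; rewrite -e in hj.
have [IH1 IH2] := IH (ltnW hk).
rewrite exprSr -mulmxE; split.
  rewrite (mulA_formula hA) inordK ?ltnS //=.
  case: ifP => h2.
    rewrite (IH2 (inord (k.+1 + p))) ?mulr0 ?addr0; last by rewrite inordK; lia.
    by rewrite mulf_neq0 // hal //; lia.
  by rewrite addr0 mulf_neq0 // hal //; lia.
move=> j hj; rewrite (mulA_formula hA).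
have h0 : (0 < j)%N by lia.
rewrite h0 IH2 ?mulr0 ?add0r; last by rewrite inordK; have := ltn_ord j; lia.
case: ifP => // h2; rewrite IH2 ?mulr0 //; rewrite inordK; lia.
Qed.
Arguments tri_lemma {F n p A al be}.

Lemma obs_lemma (F : fieldType) n p (A : 'M[F]_n.+1) (al be : nat -> F) :
  (0 < p)%N -> bidiag p A al be -> (forall j, (j + p <= n)%N -> be j != 0) ->
  forall y : 'rV[F]_n.+1,
  (forall m j, (j < p)%N -> (y *m A ^+ m) 0 (inord j) = 0) -> y = 0.
Proof.
move=> hp hA hbe y hy.
suff H : forall k m, (k <= n)%N -> (y *m A ^+ m) 0 (inord k) = 0.
  apply/rowP => j; have := H j 0%N (ltn_ord j).
  by rewrite expr0 mulmx1 inord_val mxE.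
elim/ltn_ind => k IH m hk.
case: (ltnP k p) => hkp; first exact: hy.
have := mulA_formula hA (y *m A ^+ m) 0 (inord (k - p)).
rewrite -mulmxA (_ : A ^+ m *m A = A ^+ m.+1); last by rewrite exprSr mulmxE.
rewrite IH; last 2 first.
- lia.
- lia.
rewrite inordK ?ltnS; last by lia.
rewrite (_ : (k - p + p = k)%N); last by lia.
rewrite hk.
case: ifP => h0.
  rewrite (IH (k - p).-1) ?mulr0 ?add0r; [|lia|lia].
  by move/esym/eqP; rewrite mulf_eq0 (negbTE (hbe _ _)) //=; [move/eqP | lia].
by rewrite add0r; move/esym/eqP; rewrite mulf_eq0 (negbTE (hbe _ _)) //=; [move/eqP | lia].
Qed.

Lemma horner_mx_sum_coef (F : fieldType) n (A : 'M[F]_n.+1) (q : {poly F}) :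
  horner_mx A q = \sum_(i < size q) q`_i *: A ^+ i.
Proof.
rewrite -{1}[q]coefK poly_def rmorph_sum /=; apply: eq_bigr => i _.
by rewrite linearZ /= rmorphXn /= horner_mx_X.
Qed.

Lemma cyc_lemma (F : fieldType) n p (A : 'M[F]_n.+1) (al be : nat -> F) :
  (0 < p)%N -> bidiag p A al be -> (forall j, (0 < j <= n)%N -> al j != 0) ->
  forall q : {poly F}, (size q <= n.+1)%N ->
  (forall j : 'I_n.+1, (horner_mx A q) ord0 j = 0) -> q = 0.
Proof.
move=> hp hA hal q hs hq; apply/eqP; apply: contraT => hq0.
have hsz : size q = (size q).-1.+1 by rewrite prednK // size_poly_gt0.
set d := (size q).-1 in hsz.
have hd : (d <= n)%N by rewrite hsz in hs.
have := hq (inord d).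
rewrite horner_mx_sum_coef summxE hsz big_ord_recr /= big1 ?add0r.
  have [t1 _] := tri_lemma hp hA hal d hd.
  have hl : q`_d != 0 by rewrite /d -lead_coefE lead_coef_eq0.
  by rewrite mxE; move/eqP; rewrite mulf_eq0 (negbTE hl) (negbTE t1).
move=> i _; rewrite mxE.
have [_ t2] := tri_lemma hp hA hal i (leq_trans (ltnW (ltn_ord i)) hd).
by rewrite t2 ?mulr0 // inordK; have := ltn_ord i; lia.
Qed.
Arguments obs_lemma {F n p A al be}.
Arguments cyc_lemma {F n p A al be}.

Lemma gen_main (F : fieldType) n p (A : 'M[F]_n.+1) (al be : nat -> F) (c : nat -> F) :
  (0 < p)%N -> bidiag p A al be -> (forall j, (0 < j <= n)%N -> al j != 0) ->
  (forall j, (j + p <= n)%N -> be j != 0) ->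
  (forall k j, (n.+1 <= k)%N -> (j < p)%N ->
     (A ^+ k) ord0 (inord j) = \sum_(v < n.+1) c v * (A ^+ (k - v - 1)) ord0 (inord j)) ->
  char_poly A = 'X^(n.+1) - \sum_(v < n.+1) (c v)%:P * 'X^(n - v).
Proof.
move=> hp hA hal hbe hrec.
set P := 'X^(n.+1) - _.
apply/eqP; rewrite -subr_eq0; apply/eqP.
set q := char_poly A - P.
have hsq : (size q <= n.+1)%N.
  apply/leq_sizeP => j hj.
  have hz : (\sum_(v < n.+1) (c v)%:P * 'X^(n - v))`_j = 0.
    rewrite coef_sum big1 // => v _; rewrite coefCM coefXn.
    have -> : (j == (n - v)%N) = false by apply/negbTE; have := ltn_ord v; lia.
    by rewrite mulr0.
  rewrite /q /P !coefB hz coefXn.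
  rewrite subr0.
  case: (ltngtP j n.+1) => hj2; first by lia.
    by rewrite nth_default ?size_char_poly // subr0.
  have := char_poly_monic A; rewrite monicE lead_coefE size_char_poly /= hj2 => /eqP ->.
  by apply/eqP; rewrite subr_eq0.
have hH : horner_mx A q = - (A ^+ n.+1 - \sum_(v < n.+1) c v *: A ^+ (n - v)).
  rewrite /q rmorphB /= Cayley_Hamilton sub0r /P rmorphB rmorph_sum /= rmorphXn /= horner_mx_X.
  congr (- (_ - _)); apply: eq_bigr => v _.
  by rewrite mul_polyC linearZ /= rmorphXn /= horner_mx_X.
apply: (cyc_lemma hp hA hal _ hsq).
have hy := obs_lemma hp hA hbe (row 0 (horner_mx A q)).
move=> j; have := congr1 (fun M : 'rV_n.+1 => M 0 j) (hy _); rewrite !mxE; apply.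
move=> m i hi; rewrite -row_mul mxE hH mulNmx mulmxBl mulmx_suml.
have e1 : A ^+ n.+1 *m A ^+ m = A ^+ (n.+1 + m) by rewrite mulmxE exprD.
under eq_bigr => v _ do rewrite -scalemxAl mulmxE -exprD.
rewrite e1 !mxE summxE (hrec (n.+1 + m)%N i) //; last by lia.
rewrite (eq_bigr (fun v : 'I_n.+1 => c v * (A ^+ (n - v + m)) ord0 (inord i))).
  have -> : \sum_(k < n.+1) (c k *: A ^+ (n - k + m)) 0 (inord i) = \sum_(k < n.+1) c k * (A ^+ (n-k+m)) 0 (inord i).
    by apply: eq_bigr => k _; rewrite mxE.
  by rewrite subrr oppr0.
move=> v _; congr (_ * (A ^+ _) _ _); have := ltn_ord v; lia.
Qed.

From mathcomp Require Import complex reals.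
Require Import Defs.

Lemma trX (F : fieldType) n (A : 'M[F]_n) k : (A^T) ^+ k = (A ^+ k)^T.
Proof.
elim: k => [|k IH]; first by rewrite !expr0 trmx1.
by rewrite exprS exprSr -!mulmxE trmx_mul IH.
Qed.

Lemma char_poly_tr (F : fieldType) n (A : 'M[F]_n) : char_poly A^T = char_poly A.
Proof.
rewrite /char_poly -det_tr; congr (\det _).
by apply/matrixP => i j; rewrite !mxE eq_sym.
Qed.

Lemma bidiag_L1 (R : realType) p N (a : nat -> complex R) :
  (0 < p)%N -> bidiag p (L1 p N a)^T (fun j => a j.-1) (fun _ => 1).
Proof.
move=> hp i j; rewrite !mxE.
case: (eqVneq (i:nat) (j + p)%N) => h1.
  have -> : (((i:nat) == (j:nat).-1) && (0 < j)%N) = false by lia.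
  by rewrite add0r.
rewrite addr0; case: (eqVneq (j:nat) i.+1) => h2.
  by rewrite h2 /= eqxx.
by have -> : (((i:nat) == (j:nat).-1) && (0 < j)%N) = false by lia.
Qed.

Lemma bidiag_L2 (R : realType) p N (b : nat -> complex R) :
  (0 < p)%N -> bidiag p (L2 p N b) (fun _ => 1) b.
Proof.
move=> hp i j; rewrite !mxE.
case: (eqVneq (j:nat) i.+1) => h2.
  have -> : ((i:nat) == (j + p)%N) = false by lia.
  by rewrite h2 /= eqxx addr0.
have -> : (((i:nat) == (j:nat).-1) && (0 < j)%N) = false by lia.
by rewrite add0r.
Qed.

Theorem proposition1 (R : realType) (p N : nat) (a b : nat -> complex R) :
  (1 <= p)%N -> (2 * p - 1 <= N)%N ->
  (forall i : nat, (i <= N)%N -> a i != 0) ->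
  (forall i : nat, (i <= N)%N -> b i != 0) ->
  forall Cc Ct : nat -> complex R,
  (forall k l : nat, (N.+2 <= k)%N -> (1 <= l <= p)%N ->
     S1 p N a l k = \sum_(v < N.+2) Cc v * S1 p N a l (k - v - 1)) ->
  (forall k l : nat, ((N + p).+1 <= k)%N -> (1 <= l <= p)%N ->
     S2 p N b l k = \sum_(v < (N + p).+1) Ct v * S2 p N b l (k - v - 1)) ->
  char_poly (L1 p N a)
    = 'X^(N.+2) - \sum_(v < N.+2) (Cc v)%:P * 'X^(N.+1 - v)
  /\
  char_poly (L2 p N b)
    = 'X^((N + p).+1) - \sum_(v < (N + p).+1) (Ct v)%:P * 'X^(N + p - v).
Proof.
move=> hp hN ha hb Cc Ct h1 h2; split.
  rewrite -char_poly_tr.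
  apply: (@gen_main _ N.+1 p _ _ _ Cc hp (bidiag_L1 _ _ N a hp)).
  - move=> j hj; apply: ha; lia.
  - by move=> j _; apply: oner_neq0.
  - move=> k j hk hj; have := h1 k j.+1 hk ltac:(lia).
    rewrite /S1 /= trX mxE => ->; apply: eq_bigr => v _; by rewrite trX mxE.
apply: (@gen_main _ (N + p) p _ _ _ Ct hp (bidiag_L2 _ _ N b hp)).
- by move=> j _; apply: oner_neq0.
- move=> j hj; apply: hb; lia.
- move=> k j hk hj; have := h2 k j.+1 hk ltac:(lia).
  by rewrite /S2 /= => ->.
Qed.
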